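(* Let $n\geq 1$ and $r\geq 4$ be integers, and let $S_r=\{0,1,\ldots,2^r-1\}$. Then there is a labeling of every arc of the complete binary tree of depth $n$ by letters of $S_r$ with the following property. Let $u$ and $v$ be any two distinct nodes at a common depth $h$. Let their least common ancestor have depth $h-l$, so $l\geq1$. Let $a_1a_2\ldots a_h$ and $b_1b_2\ldots b_h$ be the letters on the arcs of the root-to-$u$ and root-to-$v$ paths, respectively. Then $$H(a_{h-l+1}a_{h-l+2}\ldots a_h,\;b_{h-l+1}b_{h-l+2}\ldots b_h)\geq\begin{cases} l & \text{if } l\leq r,\\ r & \text{if } r<l\leq 2r,\\ l/2 & \text{if } l>2r.\end{cases}$$ Here $H$ is the Hamming distance, i.e. the number of positions $i$ with $a_i\neq b_i$.
   Context: An ''$r$-bit binary tree code of depth $n$'' is a complete binary tree of depth $n$ in which every arc is labeled with a letter from the alphabet $S_r=\{0,1,\ldots,2^r-1\}$. The letters can be viewed as $r$-bit vectors. The distance requirement on the labeling is the one stated in the claim. *)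

(* Defs.v *)
From mathcomp Require Import all_boot.
Set Implicit Arguments. Unset Strict Implicit. Unset Printing Implicit Defensive.

(* Nodes of the complete binary tree of depth n are bit strings (seq bool) of
   length <= n; the root is [::].  Each arc is identified with its lower
   endpoint (a nonempty string w), so a labeling of the arcs by letters of
   S_r = {0,..,2^r-1} is a function  lab : seq bool -> 'I_(2^r)  (values on
   strings of length 0 or > n are irrelevant). *)

Definition path_labels r (lab : seq bool -> 'I_(2 ^ r)) (u : seq bool)
  : seq 'I_(2 ^ r) :=
  [seq lab (take i u) | i <- iota 1 (size u)].

(* Depth of the least common ancestor = length of the longest common prefix. *)
Fixpoint lcp (u v : seq bool) : nat :=
  match u, v with
  | x :: u', y :: v' => if x == y then (lcp u' v').+1 else 0
  | _, _ => 0
  end.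

Definition hamming (T : eqType) (s t : seq T) : nat :=
  count (fun p => p.1 != p.2) (zip s t).

Definition dist_ok (r l H : nat) : Prop :=
  if l <= r then l <= H
  else if l <= 2 * r then r <= H
  else l <= 2 * H.

(* Main.v *)
Require Import Defs.
From mathcomp Require Import all_boot all_order all_algebra.
From mathcomp Require Import zify ring lra.
Import GRing.Theory Num.Theory Order.TTheory.
Local Open Scope ring_scope.
Set Implicit Arguments. Unset Strict Implicit. Unset Printing Implicit Defensive.

Notation V r := 'rV['F_2]_r.

Lemma char2V r (x : V r) : x + x = 0.
Proof. apply/rowP=> j; rewrite !mxE addrr_pchar2 //; exact: pchar_Fp. Qed.

Lemma addV_eq0 r (x y : V r) : (x + y == 0) = (x == y).
Proof. rewrite addr_eq0; congr (_ == _); apply/rowP=> j; rewrite !mxE oppr_pchar2 //; exact: pchar_Fp. Qed.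

Lemma cardV r : #|{: V r}| = (2 ^ r)%N.
Proof. by rewrite card_mx card_Fp // mul1n. Qed.

Definition unitv r (t : nat) : V r := \row_(j < r) ((nat_of_ord j == t)%:R).

Definition Cv r (g : nat -> V r) (e : seq bool) (t : nat) : V r :=
  \sum_(j < t) (if nth false e j then g (t - j.+1)%N else 0).

Lemma Cv_dep r (g g' : nat -> V r) e t :
  (forall i, (i < t)%N -> g i = g' i) -> Cv g e t = Cv g' e t.
Proof.
move=> H; apply: eq_bigr => j _; case: ifP => // _; apply: H.
have := ltn_ord j; lia.
Qed.

Lemma Cv_split r (g : nat -> V r) e s : nth false e 0 = true ->
  Cv g e s.+1 = g s + \sum_(j < s) (if nth false e j.+1 then g (s - j.+1)%N else 0).
Proof.
move=> He; rewrite /Cv big_ord_recl /= He subSS subn0; congr (_ + _).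
Qed.

Lemma Cv_unit r (g : nat -> V r) e t : nth false e 0 = true ->
  (forall i, (i < r)%N -> g i = unitv r i) -> (0 < t <= r)%N -> Cv g e t != 0.
Proof.
move=> He Hg /andP[t0 tr].
have tr' : (t.-1 < r)%N by lia.
apply/negP => /eqP /rowP /(_ (Ordinal tr')).
case: t t0 tr tr' => // t _ tr tr'.
rewrite Cv_split // !mxE summxE big1 ?addr0.
  rewrite Hg // mxE /= eqxx => /eqP; by rewrite oner_eq0.
move=> j _; case: ifP => _; last by rewrite mxE.
rewrite Hg; last by have := ltn_ord j; lia.
rewrite mxE /=; have := ltn_ord j; case: eqP => //; lia.
Qed.

Definition Zcnt r (g : nat -> V r) e s l :=
  count (fun t => Cv g e t == 0) (iota r.+1 (minn s l - r)).

Definition qq r : rat := (2 ^ r)%:R.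
Definition rho r : rat := 2%:R - (qq r)^-1.
Definition trm r (Z k l : nat) : rat := (qq r)^+Z * (rho r)^+k / (qq r)^+(l./2.+1).

Definition upd r (g : nat -> V r) s x := fun i => if i == s then x else g i.

Lemma qq_gt0 r : 0 < qq r.
Proof. by rewrite /qq ltr0n expn_gt0. Qed.

Lemma Zcnt_dep r (g g' : nat -> V r) e s l :
  (forall i, (i < s)%N -> g i = g' i) -> Zcnt g e s l = Zcnt g' e s l.
Proof.
move=> H; apply: eq_in_count => t; rewrite mem_iota => /andP[h1 h2].
rewrite (@Cv_dep _ g g') // => i it; apply: H; lia.
Qed.

Lemma Zcnt_step r (g : nat -> V r) e s l : (r <= s)%N -> (s < l)%N ->
  Zcnt g e s.+1 l = (Zcnt g e s l + (Cv g e s.+1 == 0%R))%N.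
Proof.
move=> rs sl; rewrite /Zcnt.
have -> : (minn s.+1 l - r = (minn s l - r) + 1)%N by lia.
rewrite iotaD count_cat /= addn0.
by have -> : (r.+1 + (minn s l - r) = s.+1)%N by lia.
Qed.

Lemma Zcnt_stay r (g : nat -> V r) e s l : (l <= s)%N ->
  Zcnt g e s.+1 l = Zcnt g e s l.
Proof. move=> ls; rewrite /Zcnt; congr (count _ (iota _ _)); lia. Qed.

Lemma sum_q0 r : \sum_(x : V r) (qq r)^+(x == 0) = qq r * rho r.
Proof.
rewrite (bigD1 0) //= eqxx expr1.
rewrite (eq_bigr (fun _ => 1)); last by move=> x /negbTE ->.
rewrite sumr_const cardC1 cardV /rho mulrBr mulfV; last by rewrite gt_eqF ?qq_gt0.
rewrite /qq; have : (0 < 2 ^ r)%N by rewrite expn_gt0.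
case: (2 ^ r)%N => // m _ /=. rewrite -natr1 mulrDl mul1r. 
rewrite [_ *+ _]mulr1n. lra.
Qed.

Lemma trmD r Z b k l : trm r (Z + b) k l = trm r Z k l * (qq r)^+b.
Proof. by rewrite /trm exprD; rewrite -!mulrA; congr (_ * _); rewrite mulrC -mulrA; congr (_ * _); rewrite mulrC. Qed.

Lemma trmS r Z k l : trm r Z k l * (qq r * rho r) = qq r * trm r Z k.+1 l.
Proof. rewrite /trm [rho r ^+ k.+1]exprS; ring. Qed.

Lemma trm_avg r (g : nat -> V r) e s l : nth false e 0 = true -> (r <= s)%N ->
  \sum_(x : V r) trm r (Zcnt (upd g s x) e s.+1 l) (l - maxn s.+1 r) l
  = qq r * trm r (Zcnt g e s l) (l - maxn s r) l.
Proof.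
move=> He rs.
have Zd x : Zcnt (upd g s x) e s l = Zcnt g e s l.
  by apply: Zcnt_dep => i; rewrite /upd; case: eqP => //; lia.
case: (leqP l s) => ls.
  under eq_bigr => x _ do rewrite Zcnt_stay // Zd.
  rewrite sumr_const cardV /qq mulr_natl; congr (trm _ _ _ _ *+ _); lia.
set R := \sum_(j < s) (if nth false e j.+1 then g (s - j.+1)%N else 0).
have CvE x : Cv (upd g s x) e s.+1 = x + R.
  rewrite Cv_split // /upd eqxx; congr (_ + _); apply: eq_bigr => j _.
  by case: eqP => //; have := ltn_ord j; lia.
under eq_bigr => x _ do rewrite Zcnt_step // Zd CvE trmD.
rewrite -mulr_sumr.
have -> : \sum_(x : V r) qq r ^+ (x + R == 0) = \sum_(x : V r) qq r ^+ (x == 0).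
  by rewrite [RHS](reindex_inj (addIr R)).
rewrite sum_q0 trmS; congr (_ * trm _ _ _ _); lia.
Qed.

Definition Phi r n (g : nat -> V r) s : rat :=
  \sum_(l < n.+1 | (2 * r < l)%N) \sum_(tl : (l.-1).-tuple bool)
     trm r (Zcnt g (true :: tl) s l) (l - maxn s r) l.

Lemma Phi_avg r n (g : nat -> V r) s : (r <= s)%N ->
  \sum_(x : V r) Phi n (upd g s x) s.+1 = qq r * Phi n g s.
Proof.
move=> rs; rewrite /Phi exchange_big mulr_sumr; apply: eq_bigr => l _.
rewrite exchange_big mulr_sumr; apply: eq_bigr => tl _; exact: trm_avg.
Qed.

Lemma Phi_step r n (g : nat -> V r) s : (r <= s)%N ->
  exists x, Phi n (upd g s x) s.+1 <= Phi n g s.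
Proof.
move=> rs; case: (boolP [exists x, Phi n (upd g s x) s.+1 <= Phi n g s]).
  by move/existsP.
move/existsPn => H; exfalso.
have : \sum_(x : V r) Phi n g s < \sum_(x : V r) Phi n (upd g s x) s.+1.
  apply: ltr_sum; first by apply/hasP; exists 0; rewrite ?mem_index_enum.
  by move=> x _; have := H x; rewrite -ltNge.
rewrite Phi_avg // sumr_const cardV /qq mulr_natl ltxx //.
Qed.

Lemma Phi_r r n (g g' : nat -> V r) : Phi n g r = Phi n g' r.
Proof.
apply: eq_bigr => l _; apply: eq_bigr => tl _; congr trm.
by rewrite /Zcnt; have -> : (minn r l - r = 0)%N by lia.
Qed.

Lemma Phi_inv r n k : exists g : nat -> V r,
  (forall i, (i < r)%N -> g i = unitv r i) /\
  Phi n g (r + k) <= Phi n (fun i => unitv r i) r.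
Proof.
elim: k => [|k [g [Hu Hp]]]; first by exists (fun i => unitv r i); rewrite addn0.
have [x Hx] := @Phi_step r n g (r + k) (leq_addr _ _).
exists (upd g (r + k) x); split.
  by move=> i ir; rewrite /upd; case: eqP => [?|_]; [lia | exact: Hu].
by rewrite addnS; apply: le_trans Hp.
Qed.

Definition sig r : rat := 1 - (2%:R * qq r)^-1.

Lemma sig_ge0 r : 0 <= sig r.
Proof.
rewrite /sig subr_ge0 invf_le1 ?mulr_gt0 ?qq_gt0 //.
by rewrite /qq -natrM ler1n muln_gt0 expn_gt0.
Qed.

Lemma sig_le1 r : sig r <= 1.
Proof. rewrite /sig lerBlDr lerDl invr_ge0 mulr_ge0 // ltW // qq_gt0. Qed.

Lemma geom r N :
  (\sum_(l < N.+1) (if (2 * r < l)%N then sig r ^+ (l - r) else 0)) * (1 - sig r)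
  + sig r ^+ (N.+1 - r) <= 1.
Proof.
elim: N => [|N IH].
  rewrite big_ord_recr big_ord0 /= add0r.
  by rewrite mul0r add0r exprn_ile1 ?sig_ge0 ?sig_le1.
rewrite big_ord_recr /=.
set S := \sum_(i < N.+1) _ in IH *.
case: ifP => h.
  have -> : (N.+2 - r = (N.+1 - r).+1)%N by lia.
  rewrite exprS.
  set y := sig r ^+ (N.+1 - r).
  have -> : (S + y) * (1 - sig r) + sig r * y = S * (1 - sig r) + y by ring.
  exact: IH.
rewrite addr0; apply: le_trans IH; rewrite lerD2l.
apply: ler_wiXn2l; rewrite ?sig_ge0 ?sig_le1 //; lia.
Qed.

Lemma rho_sig r : rho r = 2%:R * sig r.
Proof.
rewrite /rho /sig; have q0 : qq r != 0 by rewrite gt_eqF ?qq_gt0.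
by field; rewrite q0.
Qed.

Lemma nat_bound r l : (4 <= r)%N -> (2 * r < l)%N ->
  (2 ^ l.-1 * 2 ^ (l - r) * (4 * 2 ^ r) <= (2 ^ r) ^ (l./2.+1))%N.
Proof.
move=> r4 hl.
have -> : (4 = 2 ^ 2)%N by [].
rewrite -!expnD -expnM leq_exp2l //.
have := odd_double_half l; rewrite -muln2.
set h := l./2; case: (odd l) => /= hh; nia.
Qed.

Lemma term_bound r l : (4 <= r)%N -> (2 * r < l)%N ->
  trm r 0 (l - r) l *+ (2 ^ l.-1) <= sig r ^+ (l - r) / (4%:R * qq r).
Proof.
move=> r4 hl.
have q0 : 0 < qq r by exact: qq_gt0.
rewrite /trm expr0 mul1r rho_sig exprMn -[X in X <= _]mulr_natl.
set k := (l - r)%N; set z := (l./2.+1)%N.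
have -> : (2 ^ l.-1)%:R * ((2%:R) ^+ k * sig r ^+ k / qq r ^+ z)
   = sig r ^+ k * ((2 ^ l.-1 * 2 ^ k)%:R / qq r ^+ z).
  rewrite natrM (natrX _ 2 k); move: (sig r ^+ k) (qq r ^+ z) ((2:rat) ^+ k) ((2 ^ l.-1)%:R : rat) => a b c d; ring.
apply: ler_wpM2l; first by rewrite exprn_ge0 ?sig_ge0.
have qz : 0 < qq r ^+ z by rewrite exprn_gt0.
rewrite ler_pdivrMr // mulrC ler_pdivlMr ?mulr_gt0 ?ltr0n //.
rewrite /qq -!natrX -!natrM ler_nat mulnC.
  by rewrite mulnC; exact: nat_bound.
by rewrite expn_gt0.
Qed.

Lemma Phi_lt1 r n (g : nat -> V r) : (4 <= r)%N -> Phi n g r < 1.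
Proof.
move=> r4.
have Z0 e l : Zcnt g e r l = 0%N.
  by rewrite /Zcnt; have -> : (minn r l - r = 0)%N by lia.
rewrite /Phi.
under eq_bigr => l hl do (under eq_bigr => tl _ do rewrite Z0 maxnn;
   rewrite sumr_const card_tuple card_bool).
apply: (@le_lt_trans _ _ (\sum_(l < n.+1 | (2 * r < l)%N) sig r ^+ (l - r) / (4%:R * qq r))).
  by apply: ler_sum => l hl; apply: term_bound.
rewrite -mulr_suml (big_mkcond (fun l : 'I_n.+1 => (2 * r < l)%N)) /=.
set S := \sum_(l < n.+1) _.
have G := geom r n; rewrite -/S in G.
have E : 1 - sig r = (2%:R * qq r)^-1 by rewrite /sig; ring.
have s0 : 0 <= sig r ^+ (n.+1 - r) by rewrite exprn_ge0 ?sig_ge0.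
have q0 : 0 < qq r by exact: qq_gt0.
have -> : (4%:R * qq r)^-1 = (2%:R * qq r)^-1 / 2%:R.
  by field; rewrite gt_eqF.
rewrite E in G; lra.
Qed.

Lemma trm_ge0 r Z k l : 0 <= trm r Z k l.
Proof.
have q0 := qq_gt0 r.
have r0 : 0 <= rho r by rewrite rho_sig mulr_ge0 ?sig_ge0.
rewrite /trm; apply: mulr_ge0; [apply: mulr_ge0|rewrite invr_ge0];
  by rewrite exprn_ge0 // ltW.
Qed.

Lemma trm_ge1 r Z l : (l./2.+1 <= Z)%N -> 1 <= trm r Z 0 l.
Proof.
move=> hZ; have q0 := qq_gt0 r.
rewrite /trm expr0 mulr1 ler_pdivlMr ?exprn_gt0 // mul1r.
apply: ler_weXn2l => //.
by rewrite /qq ler1n expn_gt0.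
Qed.

Lemma good r n : (4 <= r)%N -> exists g : nat -> V r,
  (forall i, (i < r)%N -> g i = unitv r i) /\
  forall e, (size e <= n)%N -> nth false e 0 = true -> (2 * r < size e)%N ->
   (count (fun t => Cv g e t == 0%R) (iota r.+1 (size e - r)) <= (size e)./2)%N.
Proof.
move=> r4; have [g [Hu Hp]] := @Phi_inv r n n.
exists g; split => // e hs he hl.
rewrite leqNgt; apply/negP => hbad.
have := Phi_lt1 n (fun i => unitv r i) r4.
apply/negP; rewrite -leNgt; apply: le_trans Hp.
case: e hs he hl hbad => // b e' hs /= -> hl hbad.
have lo : ((size e').+1 < n.+1)%N by [].
rewrite /Phi (bigD1 (Ordinal lo)) //=.
rewrite (bigD1 (in_tuple e')) //=.
apply: le_trans (_ : trm r (Zcnt g (true :: e') (r + n) (size e').+1)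
    ((size e').+1 - maxn (r + n) r) (size e').+1 <= _).
  have -> : ((size e').+1 - maxn (r + n) r = 0)%N by lia.
  apply: trm_ge1; rewrite /Zcnt.
  by have -> : (minn (r + n) (size e').+1 = (size e').+1)%N by lia.
rewrite -addrA lerDl addr_ge0 ?sumr_ge0 // => [i _|i _].
  by rewrite trm_ge0.
by rewrite sumr_ge0 // => j _; rewrite trm_ge0.
Qed.

Lemma dist_main r n (g : nat -> V r) e : (4 <= r)%N ->
  (forall i, (i < r)%N -> g i = unitv r i) ->
  (forall e, (size e <= n)%N -> nth false e 0 = true -> (2 * r < size e)%N ->
   (count (fun t => Cv g e t == 0%R) (iota r.+1 (size e - r)) <= (size e)./2)%N) ->
  (size e <= n)%N -> nth false e 0 = true ->
  dist_ok r (size e) (count (fun t => Cv g e t != 0) (iota 1 (size e))).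
Proof.
move=> r4 Hu Hg hs he; set l := size e.
have Hnz t : (0 < t <= r)%N -> Cv g e t != 0 by move=> ht; apply: Cv_unit.
rewrite /dist_ok; case: ifP => hlr.
  rewrite (@eq_in_count _ _ predT) ?count_predT ?size_iota //.
  by move=> t; rewrite mem_iota => /andP[h1 h2]; apply: Hnz; lia.
have E : iota 1 l = iota 1 r ++ iota r.+1 (l - r).
  by rewrite -[r.+1]add1n -iotaD subnKC //; lia.
rewrite E count_cat.
have -> : count (fun t => Cv g e t != 0) (iota 1 r) = r.
  rewrite (@eq_in_count _ _ predT) ?count_predT ?size_iota //.
  by move=> t; rewrite mem_iota => /andP[h1 h2]; apply: Hnz; lia.
case: ifP => hl2; first by lia.
have Hc := Hg e hs he (_ : (2 * r < l)%N); rewrite -/l in Hc.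
have {}Hc := Hc ltac:(lia).
have Hcp := count_predC (fun t => Cv g e t == 0%R) (iota r.+1 (l - r)).
rewrite size_iota in Hcp.
have -> : count (fun t => Cv g e t != 0) (iota r.+1 (l - r)) =
          count (predC (fun t => Cv g e t == 0%R)) (iota r.+1 (l - r)) by [].
have := odd_double_half l; rewrite -muln2.
move: Hc Hcp; set c1 := count _ _; set c2 := count _ _; set h := l./2.
lia.
Qed.

Lemma lcp_facts (u v : seq bool) : size u = size v -> u != v ->
  [/\ (lcp u v < size u)%N,
      (forall j, (j < lcp u v)%N -> nth false u j = nth false v j) &
      nth false u (lcp u v) != nth false v (lcp u v)].
Proof.
elim: u v => [|x u IH] [|y v] //= [hs] huv.
case: eqP => [xy|nxy]; last first.
  by split => //; apply/eqP.
subst y; have huv' : u != v by apply: contra huv => /eqP ->.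
have [h1 h2 h3] := IH v hs huv'.
split => //; by case.
Qed.

Lemma ifadd r (a b : bool) (x : V r) :
  (if a then x else 0) + (if b then x else 0) = if a != b then x else 0.
Proof. by case: a; case: b; rewrite ?addr0 ?add0r ?char2V. Qed.

Lemma Cv_diff r (g : nat -> V r) (u v : seq bool) k i :
  size u = size v -> (k <= i <= size u)%N ->
  (forall j, (j < k)%N -> nth false u j = nth false v j) ->
  Cv g (take i u) i + Cv g (take i v) i =
  Cv g (drop k (mkseq (fun j => nth false u j != nth false v j) (size u))) (i - k).
Proof.
move=> hs /andP[ki iu] hagr.
rewrite /Cv -big_split /=.
under eq_bigr => j _ do rewrite !nth_take // ifadd.
rewrite -(big_mkord xpredT (fun j => if nth false u j != nth false v j then g (i - j.+1)%N else 0)).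
rewrite (big_cat_nat _ (n:=k)) //= big_nat_cond big1 ?add0r; last first.
  by move=> j /andP[/andP[_ hj] _]; rewrite hagr // eqxx.
rewrite -{1}[k]add0n big_addn big_mkord; apply: eq_bigr => j _.
rewrite nth_drop nth_mkseq; last by have := ltn_ord j; lia.
rewrite addnC; congr (if _ then g _ else _); lia.
Qed.

Lemma count_zip_map (T : Type) (U : eqType) (f h : T -> U) s :
  count (fun p => p.1 != p.2) (zip (map f s) (map h s)) = count (fun i => f i != h i) s.
Proof. by elim: s => //= x s ->. Qed.

Local Close Scope ring_scope.

Theorem theorem1 (n r : nat) (hn : 1 <= n) (hr : 4 <= r) :
  exists lab : seq bool -> 'I_(2 ^ r),
    forall u v : seq bool,
      size u = size v -> size u <= n -> u != v ->
      dist_ok r (size u - lcp u v)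
        (hamming (drop (lcp u v) (path_labels lab u))
                 (drop (lcp u v) (path_labels lab v))).
Proof.
have [g [Hu Hg]] := @good r n hr.
pose enc (x : V r) : 'I_(2 ^ r) := cast_ord (cardV r) (enum_rank x).
have enc_inj : injective enc by move=> a b /cast_ord_inj /enum_rank_inj.
exists (fun w => enc (Cv g w (size w))).
move=> u v hs hun huv.
have [hk hagr hne] := lcp_facts hs huv.
set k := lcp u v in hk hagr hne *.
set m := size u in hk hun *.
set d := mkseq (fun j => nth false u j != nth false v j) m.
set e := drop k d.
have se : size e = (m - k)%N by rewrite size_drop size_mkseq.
have he : nth false e 0 = true by rewrite nth_drop addn0 nth_mkseq // hne.
have key : hamming (drop k (path_labels (fun w => enc (Cv g w (size w))) u))
                   (drop k (path_labels (fun w => enc (Cv g w (size w))) v))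
           = count (fun t => Cv g e t != 0%R) (iota 1 (size e)).
  rewrite /hamming /path_labels -hs -/m -!map_drop drop_iota count_zip_map.
  rewrite addnC iotaDl count_map se; apply: eq_in_count => t.
  rewrite mem_iota => /andP[t1 t2] /=.
  rewrite inj_eq // !size_takel -?hs; try lia.
  rewrite -addV_eq0 (@Cv_diff _ _ _ _ k) //; last by lia.
  by rewrite addKn.
rewrite key -se; apply: (@dist_main r n g e) => //; lia.
Qed.
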